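(* Let $Q$ be a Jordan loop and $x\in Q$. Then (i) $x^2x^{-1}=x$; (ii) $x^4x^{-1}=x^3$; (iii) if $x^3x^8=x^{11}$, then $x^8x^{-1}=x^7$.
   Context: A loop is a set $Q$ with a binary operation (juxtaposition) and neutral element $e$ such that for all $a,b$ the equations $ax=b$, $ya=b$ have unique solutions. A Jordan loop is a commutative loop satisfying $x^2(yx)=(x^2y)x$. For $k\ge 0$, $x^k$ denotes the right-associated product $x(x(\cdots(xe)\cdots))$ with $k$ factors $x$. Since the loop is commutative, each $x$ has a unique inverse $x^{-1}$ with $xx^{-1}=x^{-1}x=e$. *)

(* Defs.v *)
From Stdlib Require Import Arith.

Record Loop := {
  carrier :> Type;
  lmul : carrier -> carrier -> carrier;
  lunit : carrier;
  lunit_l : forall x, lmul lunit x = x;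
  lunit_r : forall x, lmul x lunit = x;
  ldiv_uniq : forall a b, exists! x, lmul a x = b;
  rdiv_uniq : forall a b, exists! y, lmul y a = b
}.

Definition is_jordan_loop (Q : Loop) : Prop :=
  (forall x y : Q, lmul Q x y = lmul Q y x) /\
  (forall x y : Q,
     lmul Q (lmul Q x x) (lmul Q y x) = lmul Q (lmul Q (lmul Q x x) y) x).

Fixpoint lpow (Q : Loop) (x : Q) (k : nat) : Q :=
  match k with
  | O => lunit Q
  | S k' => lmul Q x (lpow Q x k')
  end.

Definition is_inverse (Q : Loop) (x y : Q) : Prop :=
  lmul Q x y = lunit Q /\ lmul Q y x = lunit Q.

(* Main.v *)
Require Import Defs.
From Stdlib Require Import Arith Lia.

Section S.
Variable Q : Loop.
Variable HJ : is_jordan_loop Q.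
Notation m := (lmul Q).

Lemma rcancel (a b c : Q) : m a c = m b c -> a = b.
Proof.
  intro H. destruct (rdiv_uniq Q c (m a c)) as [y [_ Hy]].
  rewrite <- (Hy a eq_refl). apply Hy. symmetry; exact H.
Qed.

Lemma comm (a b : Q) : m a b = m b a.
Proof. apply (proj1 HJ). Qed.

Lemma jor (z y : Q) : m (m z z) (m y z) = m (m (m z z) y) z.
Proof. apply (proj2 HJ). Qed.

Lemma lpow2 (x : Q) : lpow Q x 2 = m x x.
Proof. simpl. rewrite lunit_r. reflexivity. Qed.

Lemma P2 (x : Q) k : m (m x x) (lpow Q x k) = lpow Q x (S (S k)).
Proof.
  induction k.
  - simpl. rewrite !lunit_r. reflexivity.
  - change (lpow Q x (S k)) with (m x (lpow Q x k)).
    rewrite (comm x (lpow Q x k)), jor, IHk, comm. reflexivity.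
Qed.

Lemma Q4 (x : Q) k : m (lpow Q x 4) (lpow Q x k) = lpow Q x (4 + k)
  /\ m (lpow Q x 4) (lpow Q x (S k)) = lpow Q x (5 + k).
Proof.
  assert (H4 : lpow Q x 4 = m (m x x) (m x x)).
  { rewrite <- (lpow2 x) at 2. rewrite P2. reflexivity. }
  induction k.
  - split.
    + simpl lpow at 2. rewrite lunit_r. reflexivity.
    + simpl lpow at 2. rewrite lunit_r, comm. reflexivity.
  - destruct IHk as [IH1 IH2]. split; [exact IH2|].
    pose proof (jor (m x x) (lpow Q x k)) as J.
    rewrite <- H4 in J. rewrite (comm (lpow Q x k)), P2, IH1 in J.
    rewrite J, comm, P2. reflexivity.
Qed.

End S.

Theorem lemma2p5 (Q : Loop) (HJ : is_jordan_loop Q) (x xi : Q)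
  (Hxi : is_inverse Q x xi) :
  lmul Q (lpow Q x 2) xi = x /\
  lmul Q (lpow Q x 4) xi = lpow Q x 3 /\
  (lmul Q (lpow Q x 3) (lpow Q x 8) = lpow Q x 11 ->
   lmul Q (lpow Q x 8) xi = lpow Q x 7).
Proof.
  destruct Hxi as [H1 H2].
  assert (Hi : lmul Q (lpow Q x 2) xi = x).
  { rewrite lpow2. apply (rcancel Q _ _ x).
    pose proof (jor Q HJ x xi) as J. rewrite H2, lunit_r in J. auto. }
  assert (Hii : lmul Q (lpow Q x 4) xi = lpow Q x 3).
  { apply (rcancel Q _ _ (lmul Q x x)).
    pose proof (jor Q HJ (lmul Q x x) xi) as J.
    assert (H4 : lmul Q (lmul Q x x) (lmul Q x x) = lpow Q x 4).
    { rewrite <- (lpow2 Q x) at 2. rewrite P2 by exact HJ. reflexivity. }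
    rewrite H4, (comm Q HJ xi), <- lpow2, Hi in J.
    rewrite <- (lpow2 Q x), <- J, (comm Q HJ (lpow Q x 3)), lpow2, P2 by exact HJ.
    rewrite <- (lunit_r Q x) at 2. change (lmul Q x (lunit Q)) with (lpow Q x 1).
    rewrite (proj1 (Q4 Q HJ x 1)). reflexivity. }
  split; [exact Hi|]. split; [exact Hii|].
  intro H11.
  apply (rcancel Q _ _ (lpow Q x 4)).
  pose proof (jor Q HJ (lpow Q x 4) xi) as J.
  rewrite (proj1 (Q4 Q HJ x 4)), (comm Q HJ xi), Hii in J. simpl plus in J.
  rewrite <- J, (comm Q HJ (lpow Q x 8)), H11, (comm Q HJ (lpow Q x 7)).
  rewrite (proj1 (Q4 Q HJ x 7)). reflexivity.
Qed.
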